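(* Let $\rho_0\in(0,\pi/2)$ and $Q\in SO_3(\mathbb R)$. If $\bar L_i>\bar D_j$ for all $i,j\in\{1,2\}$, then $\bar L_1=\bar L_2$. If $\bar D_i>\bar L_j$ for all $i,j\in\{1,2\}$, then $\bar D_1=\bar D_2$.
   Context: $d$ is the spherical distance on the unit sphere $\mathbb S^2\subset\mathbb R^3$. $p_1=(\cos\rho_0,0,\sin\rho_0)$, $p_2=(\cos\rho_0,0,-\sin\rho_0)$, $q_1=Qp_1$, $q_2=Qp_2$; $L_1=d(p_1,q_1)$, $L_2=d(p_2,q_2)$, $D_1=d(p_1,q_2)$, $D_2=d(p_2,q_1)$; $\bar L_i=2\lceil L_i/(4\rho_0)\rceil-3$ and $\bar D_i=2\lceil D_i/(4\rho_0)-1/2\rceil-2$ for $i=1,2$. *)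

(* Defs.v *)
From Stdlib Require Import Reals ZArith.
Open Scope R_scope.

Record vec3 := V3 { vx : R; vy : R; vz : R }.

Definition dot (u v : vec3) : R := vx u * vx v + vy u * vy v + vz u * vz v.

Definition sdist (u v : vec3) : R := acos (dot u v).

(* 3x3 real matrices, given by their 9 entries: row i, column j (0 <= i,j <= 2). *)
Definition mat3 := nat -> nat -> R.

Definition mulv (Q : mat3) (v : vec3) : vec3 :=
  V3 (Q 0%nat 0%nat * vx v + Q 0%nat 1%nat * vy v + Q 0%nat 2%nat * vz v)
     (Q 1%nat 0%nat * vx v + Q 1%nat 1%nat * vy v + Q 1%nat 2%nat * vz v)
     (Q 2%nat 0%nat * vx v + Q 2%nat 1%nat * vy v + Q 2%nat 2%nat * vz v).

Definition det3 (Q : mat3) : R :=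
    Q 0%nat 0%nat * (Q 1%nat 1%nat * Q 2%nat 2%nat - Q 1%nat 2%nat * Q 2%nat 1%nat)
  - Q 0%nat 1%nat * (Q 1%nat 0%nat * Q 2%nat 2%nat - Q 1%nat 2%nat * Q 2%nat 0%nat)
  + Q 0%nat 2%nat * (Q 1%nat 0%nat * Q 2%nat 1%nat - Q 1%nat 1%nat * Q 2%nat 0%nat).

Definition orthogonal3 (Q : mat3) : Prop :=
  forall i j : nat, (i < 3)%nat -> (j < 3)%nat ->
    Q 0%nat i * Q 0%nat j + Q 1%nat i * Q 1%nat j + Q 2%nat i * Q 2%nat j
    = if Nat.eqb i j then 1 else 0.

Definition SO3 (Q : mat3) : Prop := orthogonal3 Q /\ det3 Q = 1.

Definition ceilR (x : R) : Z := (- Int_part (- x))%Z.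

Definition p1 (rho0 : R) : vec3 := V3 (cos rho0) 0 (sin rho0).
Definition p2 (rho0 : R) : vec3 := V3 (cos rho0) 0 (- sin rho0).

Definition L1 rho0 Q := sdist (p1 rho0) (mulv Q (p1 rho0)).
Definition L2 rho0 Q := sdist (p2 rho0) (mulv Q (p2 rho0)).
Definition D1 rho0 Q := sdist (p1 rho0) (mulv Q (p2 rho0)).
Definition D2 rho0 Q := sdist (p2 rho0) (mulv Q (p1 rho0)).

Definition barL (rho0 L : R) : Z := (2 * ceilR (L / (4 * rho0)) - 3)%Z.
Definition barD (rho0 D : R) : Z := (2 * ceilR (D / (4 * rho0) - 1 / 2) - 2)%Z.

(* Main.v *)
Require Import Defs.
From Stdlib Require Import Reals ZArith Lra Lia Psatz.
Open Scope R_scope.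

Lemma cs (u w : vec3) : (dot u w)^2 <= dot u u * dot w w.
Proof.
  destruct u as [a b c]; destruct w as [d e f]; unfold dot; simpl.
  assert (E : (a*a+b*b+c*c)*(d*d+e*e+f*f) - (a*d+b*e+c*f)^2
     = (a*e-b*d)^2 + (a*f-c*d)^2 + (b*f-c*e)^2) by ring.
  assert (0 <= (a*e-b*d)^2 + (a*f-c*d)^2 + (b*f-c*e)^2).
  { repeat apply Rplus_le_le_0_compat; apply pow2_ge_0. }
  lra.
Qed.

Lemma dot_bound x y : dot x x = 1 -> dot y y = 1 -> -1 <= dot x y <= 1.
Proof. intros Hx Hy. pose proof (cs x y) as H. rewrite Hx, Hy in H. nra. Qed.

Lemma tri x y z : dot x x = 1 -> dot y y = 1 -> dot z z = 1 ->
  sdist x z <= sdist x y + sdist y z.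
Proof.
  intros Hx Hy Hz. unfold sdist.
  set (c1 := dot x y). set (c2 := dot y z). set (c3 := dot x z).
  assert (B1 : -1 <= c1 <= 1) by (apply dot_bound; auto).
  assert (B2 : -1 <= c2 <= 1) by (apply dot_bound; auto).
  assert (B3 : -1 <= c3 <= 1) by (apply dot_bound; auto).
  pose proof (acos_bound c1). pose proof (acos_bound c2). pose proof (acos_bound c3).
  destruct (Rle_dec PI (acos c1 + acos c2)) as [Hle|Hlt]; [lra|].
  apply Rnot_le_lt in Hlt.
  set (u := V3 (vx x - c1 * vx y) (vy x - c1 * vy y) (vz x - c1 * vz y)).
  set (w := V3 (vx z - c2 * vx y) (vy z - c2 * vy y) (vz z - c2 * vz y)).
  assert (Euw : dot u w = c3 - c1 * c2).
  { transitivity (c3 - c2*c1 - c1*c2 + c1*c2*dot y y).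
    - unfold u, w, c1, c2, c3, dot; simpl; ring.
    - rewrite Hy; ring. }
  assert (Euu : dot u u = 1 - c1 ^ 2).
  { transitivity (dot x x - 2*c1*c1 + c1*c1*dot y y).
    - unfold u, c1, dot; simpl; ring.
    - rewrite Hx, Hy; ring. }
  assert (Eww : dot w w = 1 - c2 ^ 2).
  { transitivity (dot z z - 2*c2*c2 + c2*c2*dot y y).
    - unfold w, c2, dot; simpl; ring.
    - rewrite Hz, Hy; ring. }
  pose proof (cs u w) as G. rewrite Euw, Euu, Eww in G.
  assert (Hg : -(c3 - c1 * c2) <= sqrt (1 - c1²) * sqrt (1 - c2²)).
  { rewrite <- sqrt_mult by (unfold Rsqr; nra).
    apply Rle_trans with (Rabs (c3 - c1 * c2)); [rewrite <- Rabs_Ropp; apply Rle_abs|].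
    rewrite <- sqrt_Rsqr_abs. apply sqrt_le_1_alt. unfold Rsqr; nra. }
  assert (Hc : cos (acos c1 + acos c2) <= c3).
  { rewrite cos_plus, !cos_acos, !sin_acos by lra. lra. }
  destruct (Rle_dec (acos c3) (acos c1 + acos c2)) as [ok|ko]; [exact ok|].
  apply Rnot_le_lt in ko.
  pose proof (cos_decreasing_1 (acos c1 + acos c2) (acos c3)) as K.
  rewrite cos_acos in K by lra. exfalso.
  assert (c3 < cos (acos c1 + acos c2)) by (apply K; lra). lra.
Qed.

Lemma sdist_sym x y : sdist x y = sdist y x.
Proof. unfold sdist, dot. f_equal. ring. Qed.

Lemma dot_Q Q x y : orthogonal3 Q -> dot (mulv Q x) (mulv Q y) = dot x y.
Proof.
  intros HQ.
  assert (G : forall i j, (i < 3)%nat -> (j < 3)%nat ->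
     Q 0%nat i * Q 0%nat j + Q 1%nat i * Q 1%nat j + Q 2%nat i * Q 2%nat j
     = if Nat.eqb i j then 1 else 0) by exact HQ.
  pose proof (G 0 0 ltac:(lia) ltac:(lia))%nat as g00.
  pose proof (G 0 1 ltac:(lia) ltac:(lia))%nat as g01.
  pose proof (G 0 2 ltac:(lia) ltac:(lia))%nat as g02.
  pose proof (G 1 0 ltac:(lia) ltac:(lia))%nat as g10.
  pose proof (G 1 1 ltac:(lia) ltac:(lia))%nat as g11.
  pose proof (G 1 2 ltac:(lia) ltac:(lia))%nat as g12.
  pose proof (G 2 0 ltac:(lia) ltac:(lia))%nat as g20.
  pose proof (G 2 1 ltac:(lia) ltac:(lia))%nat as g21.
  pose proof (G 2 2 ltac:(lia) ltac:(lia))%nat as g22.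
  simpl in g00, g01, g02, g10, g11, g12, g20, g21, g22.
  destruct x as [a b c]; destruct y as [d e f]; unfold dot, mulv; simpl.
  set (A := Q 0%nat 0%nat) in *. set (B := Q 0%nat 1%nat) in *. set (C := Q 0%nat 2%nat) in *.
  set (D := Q 1%nat 0%nat) in *. set (E := Q 1%nat 1%nat) in *. set (F := Q 1%nat 2%nat) in *.
  set (G' := Q 2%nat 0%nat) in *. set (H := Q 2%nat 1%nat) in *. set (I := Q 2%nat 2%nat) in *.
  transitivity (a*d*(A*A+D*D+G'*G') + a*e*(A*B+D*E+G'*H) + a*f*(A*C+D*F+G'*I)
    + b*d*(B*A+E*D+H*G') + b*e*(B*B+E*E+H*H) + b*f*(B*C+E*F+H*I)
    + c*d*(C*A+F*D+I*G') + c*e*(C*B+F*E+I*H) + c*f*(C*C+F*F+I*I)); [ring|].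
  rewrite g00, g01, g02, g10, g11, g12, g20, g21, g22. ring.
Qed.

Lemma ceil_spec x : IZR (ceilR x) - 1 < x <= IZR (ceilR x).
Proof.
  unfold ceilR. rewrite opp_IZR. pose proof (base_Int_part (- x)). lra.
Qed.

Lemma int_lt a b : IZR a < IZR b + 1 -> (a <= b)%Z.
Proof. intro H. rewrite <- plus_IZR in H. apply lt_IZR in H. lia. Qed.

Lemma key r L D : 0 < r -> L <= D + 2 * r -> D <= L + 2 * r ->
  (ceilR (L / (4 * r)) - 1 <= ceilR (D / (4 * r) - 1/2) <= ceilR (L / (4 * r)))%Z.
Proof.
  intros Hr H1 H2.
  assert (E1 : L / (4 * r) <= D / (4 * r) - 1/2 + 1).
  { apply Rmult_le_reg_r with (4 * r); [lra|]. field_simplify; lra. }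
  assert (E2 : D / (4 * r) - 1/2 <= L / (4 * r)).
  { apply Rmult_le_reg_r with (4 * r); [lra|]. field_simplify; lra. }
  pose proof (ceil_spec (L / (4 * r))). pose proof (ceil_spec (D / (4 * r) - 1/2)).
  split.
  - assert (IZR (ceilR (L / (4 * r)) - 1) < IZR (ceilR (D / (4 * r) - 1 / 2)) + 1).
    { rewrite minus_IZR. lra. }
    apply int_lt in H3. lia.
  - apply int_lt. lra.
Qed.

Theorem mainTheorem3 (rho0 : R) (Q : mat3) :
  0 < rho0 < PI / 2 -> SO3 Q ->
  (let bL1 := barL rho0 (L1 rho0 Q) in
   let bL2 := barL rho0 (L2 rho0 Q) in
   let bD1 := barD rho0 (D1 rho0 Q) in
   let bD2 := barD rho0 (D2 rho0 Q) in
   ((bL1 > bD1 /\ bL1 > bD2 /\ bL2 > bD1 /\ bL2 > bD2)%Z -> bL1 = bL2) /\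
   ((bD1 > bL1 /\ bD1 > bL2 /\ bD2 > bL1 /\ bD2 > bL2)%Z -> bD1 = bD2)).
Proof.
  intros Hr [HO _].
  set (P1 := p1 rho0). set (P2 := p2 rho0).
  set (q1 := mulv Q P1). set (q2 := mulv Q P2).
  assert (U1 : dot P1 P1 = 1).
  { unfold P1, p1, dot; simpl. pose proof (sin2_cos2 rho0). unfold Rsqr in *. lra. }
  assert (U2 : dot P2 P2 = 1).
  { unfold P2, p2, dot; simpl. pose proof (sin2_cos2 rho0). unfold Rsqr in *. lra. }
  assert (V1 : dot q1 q1 = 1) by (unfold q1; rewrite dot_Q; auto).
  assert (V2 : dot q2 q2 = 1) by (unfold q2; rewrite dot_Q; auto).
  assert (Dp : sdist P1 P2 = 2 * rho0).
  { unfold sdist. replace (dot P1 P2) with (cos (2 * rho0)).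
    - apply acos_cos. lra.
    - unfold P1, P2, p1, p2, dot; simpl. rewrite cos_2a. ring. }
  assert (Dq : sdist q1 q2 = 2 * rho0).
  { unfold sdist, q1, q2. rewrite dot_Q by auto. exact Dp. }
  assert (Dp' : sdist P2 P1 = 2 * rho0) by (rewrite sdist_sym; auto).
  assert (Dq' : sdist q2 q1 = 2 * rho0) by (rewrite sdist_sym; auto).
  assert (l1 := L1 rho0 Q). 
  unfold barL, barD, L1, L2, D1, D2. fold P1 P2. fold q1 q2.
  pose proof (tri P1 q2 q1 U1 V2 V1). pose proof (tri P1 P2 q1 U1 U2 V1).
  pose proof (tri P2 q1 q2 U2 V1 V2). pose proof (tri P2 P1 q2 U2 U1 V2).
  pose proof (tri P1 q1 q2 U1 V1 V2). pose proof (tri P1 P2 q2 U1 U2 V2).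
  pose proof (tri P2 q2 q1 U2 V2 V1). pose proof (tri P2 P1 q1 U2 U1 V1).
  rewrite (sdist_sym P2 q1) in *. rewrite (sdist_sym P1 q2) in *.
  rewrite (sdist_sym P1 q1) in *. rewrite (sdist_sym P2 q2) in *.
  assert (r0 : 0 < rho0) by lra.
  pose proof (key rho0 (sdist q1 P1) (sdist q2 P1) r0 ltac:(lra) ltac:(lra)).
  pose proof (key rho0 (sdist q1 P1) (sdist q1 P2) r0 ltac:(lra) ltac:(lra)).
  pose proof (key rho0 (sdist q2 P2) (sdist q2 P1) r0 ltac:(lra) ltac:(lra)).
  pose proof (key rho0 (sdist q2 P2) (sdist q1 P2) r0 ltac:(lra) ltac:(lra)).
  cbv zeta. split; intros; lia.
Qed.
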